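(* For every $1\le j\le d$, $k\ge1$, $\hat x\neq\hat y\in\mathbb Z^d$ and $\eta\in\Omega$, $$c^{(k),j}_{\hat x,\hat y}(\eta)\,[\eta(\hat y)-\eta(\hat x)]=P^{(k),j}(\tau^{\hat y}\eta)-P^{(k),j}(\tau^{\hat x}\eta)-\nabla_jA^{(k),j}_{\hat x,\hat y}(\eta),$$ where $P^{(k),j}(\eta)=\frac12\prod_{i=0}^{k-1}\eta(i\hat e_j)+\frac12\prod_{i=0}^{k-1}\eta(-i\hat e_j)$, $A^{(k),j}_{\hat x,\hat y}=M^{(k),j}_{\hat x,\hat y}-M^{(k),j}_{\hat y,\hat x}$ and $M^{(k),j}_{\hat x,\hat y}(\eta)=\frac12\sum_{\ell=1}^{k-1}\prod_{i_0=1}^{\ell}\eta(\hat x-i_0\hat e_j)\prod_{i_1=0}^{k-1-\ell}\eta(\hat y+i_1\hat e_j)$.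
   Context: $\Omega=\{0,\dots,N_{\mathrm e}\}^{\mathbb Z^d}$, $\{\hat e_1,\dots,\hat e_d\}$ the canonical basis. $\tau^{\hat z}\eta(\hat w)=\eta(\hat w+\hat z)$, $\tau_j\eta(\hat w)=\eta(\hat w+\hat e_j)$, and for $A:\Omega\to\mathbb R$, $\nabla_jA(\eta)=A(\tau_j\eta)-A(\eta)$. For $k\ge1$: $r^{(k),j}_{\hat x,\hat y}(\eta)=\sum_{\ell=1}^k\prod_{i=1}^{k-\ell}\eta(\hat x-i\hat e_j)\prod_{m=1}^{\ell-1}\eta(\hat y+m\hat e_j)$ (empty products equal $1$), and $c^{(k),j}_{\hat x,\hat y}=\frac12\big(r^{(k),j}_{\hat x,\hat y}+r^{(k),j}_{\hat y,\hat x}\big)$. Empty sums equal $0$. *)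

(* Defs.v *)
From HB Require Import structures.
From mathcomp Require Import all_boot all_order all_algebra.
From mathcomp Require Import reals.
Set Implicit Arguments. Unset Strict Implicit. Unset Printing Implicit Defensive.
Import Order.TTheory GRing.Theory Num.Theory.
Local Open Scope ring_scope.

Definition site (d : nat) := 'rV[int]_d.
Definition ehat (d : nat) (j : 'I_d) : site d := delta_mx 0 j.
(* configurations: eta : Z^d -> nat (the range {0..N_e} is a hypothesis) *)
Definition config (d : nat) := site d -> nat.

Section Defs.
Variables (R : realType) (d : nat).

Definition shift (z : site d) (eta : config d) : config d := fun w => eta (w + z).
Definition tau (j : 'I_d) (eta : config d) : config d := shift (ehat j) eta.
Definition nabla (j : 'I_d) (A : config d -> R) (eta : config d) : R :=
  A (tau j eta) - A eta.

Definition rr (k : nat) (j : 'I_d) (x y : site d) (eta : config d) : R :=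
  \sum_(1 <= l < k.+1)
     (\prod_(1 <= i < (k - l).+1) (eta (x - ehat j *+ i))%:R) *
     (\prod_(1 <= m < l) (eta (y + ehat j *+ m))%:R).

Definition cc (k : nat) (j : 'I_d) (x y : site d) (eta : config d) : R :=
  2^-1 * (rr k j x y eta + rr k j y x eta).

Definition PP (k : nat) (j : 'I_d) (eta : config d) : R :=
  2^-1 * \prod_(0 <= i < k) (eta (ehat j *+ i))%:R +
  2^-1 * \prod_(0 <= i < k) (eta (- (ehat j *+ i)))%:R.

Definition MM (k : nat) (j : 'I_d) (x y : site d) (eta : config d) : R :=
  2^-1 * \sum_(1 <= l < k)
     (\prod_(1 <= i0 < l.+1) (eta (x - ehat j *+ i0))%:R) *
     (\prod_(0 <= i1 < k - l) (eta (y + ehat j *+ i1))%:R).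

Definition AA (k : nat) (j : 'I_d) (x y : site d) (eta : config d) : R :=
  MM k j x y eta - MM k j y x eta.

End Defs.

(* Main.v *)
Require Import Defs.
From HB Require Import structures.
From mathcomp Require Import all_boot all_order all_algebra.
From mathcomp Require Import reals ring zify.
Set Warnings "-notation-overridden,-ambiguous-paths,-deprecated".
Import Order.TTheory GRing.Theory Num.Theory.
Local Open Scope ring_scope.
Lemma core (R : comNzRingType) (u v u' v' : nat -> R) (k : nat) :
  (0 < k)%N -> (forall i, u' i.+1 = u i) -> (forall i, v' i = v i.+1) ->
  (\sum_(1 <= l < k.+1) (\prod_(1 <= i < (k - l).+1) u i) * (\prod_(1 <= m < l) v m)) * (v 0%N - u 0%N)
  = \prod_(0 <= i < k) v i - \prod_(0 <= i < k) u i
    + (\sum_(1 <= l < k) (\prod_(1 <= i0 < l.+1) u i0) * (\prod_(0 <= i1 < k - l) v i1)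
     - \sum_(1 <= l < k) (\prod_(1 <= i0 < l.+1) u' i0) * (\prod_(0 <= i1 < k - l) v' i1)).
Proof.
case: k => // n _ Hu Hv.
set U0 := fun q => \prod_(0 <= i < q) u i.
set U1 := fun q => \prod_(0 <= i < q) u i.+1.
set V0 := fun q => \prod_(0 <= i < q) v i.
set V1 := fun q => \prod_(0 <= i < q) v i.+1.
have E1 : forall p, (p <= n)%N -> (\prod_(1 <= i < (n.+1 - p.+1).+1) u i) * (\prod_(1 <= m < p.+1) v m) * (v 0%N - u 0%N)
   = U1 (n - p)%N * V0 p.+1 - U0 (n - p)%N.+1 * V1 p.
  move=> p hp; rewrite /U1 /V0 /U0 /V1 subSS (big_nat_recl (n-p) 0) // (big_nat_recl p 0) //.
  rewrite !big_add1 /=; ring.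
rewrite big_add1 /= mulr_suml.
under [LHS]eq_big_nat => p /andP[_ hp] do rewrite E1 //.
rewrite sumrB.
have Ea : \sum_(0 <= p < n.+1) U1 (n - p)%N * V0 p.+1 = V0 n.+1 + \sum_(1 <= l < n.+1) U1 l * V0 (n.+1 - l)%N.
  rewrite (big_nat_recr n) //= subnn.
have -> : U1 0%N = 1 by rewrite /U1 big_geq.
rewrite mul1r addrC; congr (_ + _).
  rewrite big_nat_rev big_add1 /=; apply: eq_big_nat => p /andP[_ hp].
  rewrite ?add0n; congr (U1 _ * V0 _); lia.
have Eb : \sum_(0 <= p < n.+1) U0 (n - p)%N.+1 * V1 p = U0 n.+1 + \sum_(1 <= l < n.+1) U0 l * V1 (n.+1 - l)%N.
  rewrite (big_nat_recl n) //= subn0.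
have -> : V1 0%N = 1 by rewrite /V1 big_geq.
rewrite mulr1; congr (_ + _).
  rewrite [RHS]big_nat_rev big_add1 /=; apply: eq_big_nat => p /andP[_ hp].
  rewrite ?add0n; congr (U0 _ * V1 _); lia.
rewrite Ea Eb.
have Ec : \sum_(1 <= l < n.+1) (\prod_(1 <= i0 < l.+1) u i0) * (\prod_(0 <= i1 < n.+1 - l) v i1) = \sum_(1 <= l < n.+1) U1 l * V0 (n.+1 - l)%N.
  by apply: eq_big_nat => l _; rewrite /U1 big_add1.
have Ed : \sum_(1 <= l < n.+1) (\prod_(1 <= i0 < l.+1) u' i0) * (\prod_(0 <= i1 < n.+1 - l) v' i1) = \sum_(1 <= l < n.+1) U0 l * V1 (n.+1 - l)%N.
  apply: eq_big_nat => l _; rewrite /U0 /V1 big_add1 /=; congr (_ * _); apply: eq_bigr => i _; by [].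
rewrite Ec Ed /U0 /V0; ring.
Qed.

Theorem mainTheorem3 (R : realType) (d Ne : nat) (j : 'I_d) (k : nat)
  (x y : site d) (eta : config d) :
  (0 < k)%N -> x != y -> (forall z, (eta z <= Ne)%N) ->
  cc R k j x y eta * ((eta y)%:R - (eta x)%:R)
  = PP R k j (shift y eta) - PP R k j (shift x eta)
    - nabla j (AA R k j x y) eta.
Proof.
move=> hk _ _.
have Hu : forall x0 : site d, forall i, (eta (x0 - ehat j *+ i.+1 + ehat j))%:R = (eta (x0 - ehat j *+ i))%:R :> R.
  by move=> x0 i; rewrite mulrS opprD addrA addrAC subrK.
have Hv : forall y0 : site d, forall i, (eta (y0 + ehat j *+ i + ehat j))%:R = (eta (y0 + ehat j *+ i.+1))%:R :> R.
  by move=> y0 i; rewrite mulrSr addrA.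
have H1 := @core R (fun i => (eta (x - ehat j *+ i))%:R) (fun i => (eta (y + ehat j *+ i))%:R)
   (fun i => (eta (x - ehat j *+ i + ehat j))%:R) (fun i => (eta (y + ehat j *+ i + ehat j))%:R) k hk (Hu x) (Hv y).
have H2 := @core R (fun i => (eta (y - ehat j *+ i))%:R) (fun i => (eta (x + ehat j *+ i))%:R)
   (fun i => (eta (y - ehat j *+ i + ehat j))%:R) (fun i => (eta (x + ehat j *+ i + ehat j))%:R) k hk (Hu y) (Hv x).
rewrite /= !mulr0n !subr0 !addr0 in H1 H2.
have -> : cc R k j x y eta * ((eta y)%:R - (eta x)%:R) =
   2^-1 * (rr R k j x y eta * ((eta y)%:R - (eta x)%:R)) - 2^-1 * (rr R k j y x eta * ((eta x)%:R - (eta y)%:R)).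
  rewrite /cc; ring.
rewrite /rr H1 H2 /PP /shift /nabla /AA /MM /tau /shift.
have P1 : forall z : site d, \prod_(0 <= i < k) (eta (ehat j *+ i + z))%:R = \prod_(0 <= i < k) (eta (z + ehat j *+ i))%:R :> R.
  by move=> z; apply: eq_bigr => i _; rewrite addrC.
have P2 : forall z : site d, \prod_(0 <= i < k) (eta (- (ehat j *+ i) + z))%:R = \prod_(0 <= i < k) (eta (z - ehat j *+ i))%:R :> R.
  by move=> z; apply: eq_bigr => i _; rewrite addrC.
rewrite !P1 !P2.
ring.
Qed.
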